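(* Let $n\ge2$, let $T=(n;\sigma,\delta,\tau)$ be a normal tridiagonal Toeplitz matrix with $\sigma\tau\ne0$, and let $\lambda_h=\delta+2\sqrt{\sigma\tau}\cos\frac{h\pi}{n+1}$. Then \[ \kappa_{\mathcal T}(\lambda_h)=\sqrt{\frac1n+\frac2{n-1}\cos^2\frac{h\pi}{n+1}},\qquad h=1,\dots,n. \]
   Context: $T=(n;\sigma,\delta,\tau)$ is the $n\times n$ tridiagonal Toeplitz matrix with diagonal $\delta$, superdiagonal $\tau$, subdiagonal $\sigma$. Its eigenvalue $\lambda_h$ has right eigenvector $x_h$, $x_{h,k}=(\sqrt{\sigma/\tau})^k\sin\frac{hk\pi}{n+1}$, and left eigenvector $y_h$, $y_{h,k}=(\sqrt{\bar\tau/\bar\sigma})^k\sin\frac{hk\pi}{n+1}$. Let $\widetilde x_h,\widetilde y_h$ be their normalizations, $\kappa(\lambda_h)=\|x_h\|_2\|y_h\|_2/|y_h^Hx_h|$, $W_h=\widetilde y_h\widetilde x_h^H$, $\mathcal T$ the subspace of $n\times n$ tridiagonal Toeplitz matrices, $W_h|_{\mathcal T}$ the Frobenius-orthogonal projection of $W_h$ onto $\mathcal T$, and $\kappa_{\mathcal T}(\lambda_h)=\kappa(\lambda_h)\|W_h|_{\mathcal T}\|_F$. *)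

(* Defs.v *)
From HB Require Import structures.
From mathcomp Require Import all_boot all_order all_algebra.
From mathcomp Require Import all_classical all_reals all_analysis.
From mathcomp Require Import complex.

Unset Implicit Arguments.
Unset Strict Implicit.
Unset Printing Implicit Defensive.

Import Order.TTheory GRing.Theory Num.Theory.
Local Open Scope ring_scope.
Local Open Scope complex_scope.

Section TTDefs.
Variable R : realType.
Local Notation C := (complex R).

Definition ctr m p (A : 'M[C]_(m, p)) : 'M[C]_(p, m) :=
  \matrix_(i, j) (A j i)^*.
Arguments ctr {m p}.

Definition tridiag_toeplitz (n : nat) (sigma delta tau : C) : 'M[C]_n :=
  \matrix_(i, j)
    if i == j :> nat then delta
    else if (j == i.+1 :> nat) then tau
    else if (i == j.+1 :> nat) then sigma
    else 0.

Definition normal_mx n (A : 'M[C]_n) : Prop := A *m ctr A = ctr A *m A.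

Definition in_TT (n : nat) (M : 'M[C]_n) : Prop :=
  exists a b c : C, M = tridiag_toeplitz n a b c.

Definition frob_dot n (A B : 'M[C]_n) : C :=
  \sum_(i < n) \sum_(j < n) A i j * (B i j)^*.
Arguments frob_dot {n}.
Definition frob_norm n (A : 'M[C]_n) : C :=
  sqrtC (\sum_(i < n) \sum_(j < n) `|A i j| ^+ 2).

Arguments frob_norm {n}.

Definition is_TT_proj n (W P : 'M[C]_n) : Prop :=
  in_TT n P /\ forall M, in_TT n M -> frob_dot (W - P) M = 0.

(* Vectors in C^n, indexed by k = 1..n (ordinal i stands for k = i+1). *)
Definition vnorm n (v : 'I_n -> C) : C := sqrtC (\sum_(i < n) `|v i| ^+ 2).
Arguments vnorm {n}.
Definition vdotH n (y x : 'I_n -> C) : C := \sum_(i < n) (y i)^* * x i.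

Arguments vdotH {n}.

(* s is the chosen square root sqrt(sigma tau); the consistent branches
   are sqrt(sigma/tau) := s / tau and sqrt(conj tau / conj sigma) :=
   conj (tau / s). *)
Definition sinC n (h k : nat) : C :=
  (sin ((h * k)%:R * pi / (n.+1)%:R) : R)%:C.

Definition eig_lambda n (delta s : C) (h : nat) : C :=
  delta + 2%:R * s * (cos (h%:R * pi / (n.+1)%:R) : R)%:C.

Definition right_eigvec n (tau s : C) (h : nat) : 'I_n -> C :=
  fun i => (s / tau) ^+ i.+1 * sinC n h i.+1.
Definition left_eigvec n (tau s : C) (h : nat) : 'I_n -> C :=
  fun i => ((tau / s)^*) ^+ i.+1 * sinC n h i.+1.

Definition kappa n (tau s : C) (h : nat) : C :=
  let x := right_eigvec n tau s h in
  let y := left_eigvec n tau s h in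
  vnorm x * vnorm y / `|vdotH y x|.

Definition W_h n (tau s : C) (h : nat) : 'M[C]_n :=
  let x := right_eigvec n tau s h in
  let y := left_eigvec n tau s h in
  \matrix_(i, j) ((y i / vnorm y) * (x j / vnorm x)^*).

End TTDefs.

Arguments tridiag_toeplitz {R}.
Arguments normal_mx {R n}.
Arguments is_TT_proj {R n}.
Arguments in_TT {R}.
Arguments kappa {R}.
Arguments W_h {R}.
Arguments eig_lambda {R}.
Arguments right_eigvec {R}.
Arguments left_eigvec {R}.
Arguments sinC {R}.
Arguments frob_norm {R n}.
Arguments frob_dot {R n}.
Arguments vnorm {R n}.
Arguments vdotH {R n}.
Arguments ctr {R m p}.

(* Main.v *)
Require Import Defs.
From HB Require Import structures.
From mathcomp Require Import all_boot all_order all_algebra.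
From mathcomp Require Import all_classical all_reals all_analysis.
From mathcomp Require Import complex.
From mathcomp Require Import zify ring.
Import Order.TTheory GRing.Theory Num.Theory.
Local Open Scope ring_scope.
Local Open Scope complex_scope.

Section Gen.
Variable R : realType.
Local Notation C := (complex R).

Lemma conjcE (x : C) : conjc x = Num.conj x. Proof. by []. Qed.

Lemma sum_ifeq n k (g : nat -> C) :
  \sum_(j < n) (if (j:nat) == k then g j else 0) = if (k < n)%N then g k else 0.
Proof.
elim: n => [|n IH]; first by rewrite big_ord0.
rewrite big_ord_recr /= IH.
case: (ltngtP k n) => [lt|gt|->]; rewrite ?ltnn ?eqxx ?add0r.
- by rewrite addr0 ltnS ltnW.
- by rewrite ltnS leqNgt gt.
- by rewrite ltnSn.
Qed.

Lemma sum_up n (f : 'I_n -> 'I_n -> C) (g : nat -> nat -> C) :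
  (forall i j : 'I_n, (j:nat) == i.+1 -> f i j = g i j) ->
  \sum_(i < n) \sum_(j < n) (if (j:nat) == i.+1 then f i j else 0)
  = \sum_(i < n.-1) g i i.+1.
Proof.
move=> H.
rewrite (eq_bigr (fun i : 'I_n => if (i.+1 < n)%N then g i i.+1 else 0)); last first.
  move=> i _; rewrite -(sum_ifeq n i.+1 (g i)); apply: eq_bigr => j _.
  by case: ifP => // /H ->.
case: n f H => [|m] f H; first by rewrite !big_ord0.
rewrite big_ord_recr /= ltnn addr0; apply: eq_bigr => i _.
by rewrite ltnS ltn_ord.
Qed.

Lemma sum_low n (f : 'I_n -> 'I_n -> C) (g : nat -> nat -> C) :
  (forall i j : 'I_n, (i:nat) == j.+1 -> f i j = g i j) ->
  \sum_(i < n) \sum_(j < n) (if (i:nat) == j.+1 then f i j else 0)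
  = \sum_(j < n.-1) g j.+1 j.
Proof.
move=> H; rewrite exchange_big /=.
have := @sum_up n (fun j i => f i j) (fun j i => g i j).
by apply => j i /H.
Qed.

Lemma sum_diag n (f : 'I_n -> 'I_n -> C) :
  \sum_(i < n) \sum_(j < n) (if (i:nat) == j then f i j else 0)
  = \sum_(i < n) f i i.
Proof.
apply: eq_bigr => i _.
rewrite (bigD1 i) //= eqxx big1 ?addr0 // => j ne.
by case: eqP => // e; move/eqP: ne; case; apply: val_inj.
Qed.

Definition dsum n (A : 'M[C]_n) :=
  \sum_(i < n) \sum_(j < n) (if (i:nat) == j then A i j else 0).
Definition usum n (A : 'M[C]_n) :=
  \sum_(i < n) \sum_(j < n) (if (j:nat) == i.+1 then A i j else 0).
Definition lsum n (A : 'M[C]_n) :=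
  \sum_(i < n) \sum_(j < n) (if (i:nat) == j.+1 then A i j else 0).

Arguments dsum {n}.
Arguments usum {n}.
Arguments lsum {n}.

Lemma frob_dot_TT n (A : 'M[C]_n) a b c :
  frob_dot A (tridiag_toeplitz n a b c) =
  dsum A * Num.conj b + usum A * Num.conj c + lsum A * Num.conj a.
Proof.
rewrite /frob_dot /dsum /usum /lsum !mulr_suml -!big_split.
apply: eq_bigr => i _; rewrite !mulr_suml -!big_split; apply: eq_bigr => j _ /=.
rewrite mxE.
have [e1|e1] := eqVneq (i:nat) j; have [e2|e2] := eqVneq (j:nat) i.+1;
  have [e3|e3]:= eqVneq (i:nat) j.+1;
  rewrite ?mul0r ?add0r ?addr0 ?conjC0 ?mulr0 //; exfalso;
  move: e1 e2 e3; move: (nat_of_ord i) (nat_of_ord j) => x y.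
all: try (by move=> -> /eqP; rewrite ?eqn_leq ?ltnn ?andbF // ?leqnSn).
by move=> _ -> H; have H2 : @eq nat x x.+2 := H; lia.
Qed.

Lemma sum_condB n (cond : 'I_n -> 'I_n -> bool) (A B : 'M[C]_n) :
  \sum_(i < n) \sum_(j < n) (if cond i j then (A - B) i j else 0) =
  \sum_(i < n) \sum_(j < n) (if cond i j then A i j else 0) -
  \sum_(i < n) \sum_(j < n) (if cond i j then B i j else 0).
Proof.
rewrite -sumrB; apply: eq_bigr => i _; rewrite -sumrB; apply: eq_bigr => j _.
by case: ifP => _; rewrite ?subr0 // !mxE.
Qed.

Lemma dsumB n (A B : 'M[C]_n) : dsum (A - B) = dsum A - dsum B.
Proof. exact: sum_condB. Qed.
Lemma usumB n (A B : 'M[C]_n) : usum (A - B) = usum A - usum B.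
Proof. exact: sum_condB. Qed.
Lemma lsumB n (A B : 'M[C]_n) : lsum (A - B) = lsum A - lsum B.
Proof. exact: sum_condB. Qed.

Lemma dsum_TT n a b c : dsum (tridiag_toeplitz n a b c) = n%:R * b.
Proof.
rewrite /dsum sum_diag (eq_bigr (fun _ => b)); last by move=> i _; rewrite mxE eqxx.
by rewrite sumr_const card_ord mulr_natl.
Qed.

Lemma usum_TT n a b c : usum (tridiag_toeplitz n a b c) = n.-1%:R * c.
Proof.
rewrite /usum (@sum_up n _ (fun _ _ => c)).
  by rewrite sumr_const card_ord mulr_natl.
move=> i j /eqP e; rewrite mxE e eqxx.
by rewrite (ltn_eqF (ltnSn i)).
Qed.

Lemma lsum_TT n a b c : lsum (tridiag_toeplitz n a b c) = n.-1%:R * a.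
Proof.
rewrite /lsum (@sum_low n _ (fun _ _ => a)).
  by rewrite sumr_const card_ord mulr_natl.
move=> i j /eqP e; rewrite mxE e eqxx.
by rewrite (gtn_eqF (ltnSn j)) (ltn_eqF (leqW (ltnSn j))).
Qed.

Definition projTT n (W : 'M[C]_n) :=
  tridiag_toeplitz n (lsum W / n.-1%:R) (dsum W / n%:R) (usum W / n.-1%:R).

Arguments projTT {n}.

Lemma projTT_ok n (W : 'M[C]_n) : (2 <= n)%N -> is_TT_proj W (projTT W).
Proof.
move=> n2; split; first by do 3 eexists.
have n0 : n%:R != 0 :> C by rewrite pnatr_eq0 -lt0n; lia.
have n1 : n.-1%:R != 0 :> C by rewrite pnatr_eq0 -lt0n; lia.
move=> M [a [b [c ->]]].
rewrite frob_dot_TT dsumB usumB lsumB dsum_TT usum_TT lsum_TT.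
by rewrite ![_%:R * (_ / _)]mulrC !divfK // !subrr !mul0r !addr0.
Qed.

Lemma projTT_uniq n (W P : 'M[C]_n) : (2 <= n)%N -> is_TT_proj W P -> P = projTT W.
Proof.
move=> n2 [[a [b [c ->]]] H].
have n0 : n%:R != 0 :> C by rewrite pnatr_eq0 -lt0n; lia.
have n1 : n.-1%:R != 0 :> C by rewrite pnatr_eq0 -lt0n; lia.
have H1 := H _ (ex_intro _ 1 (ex_intro _ 0 (ex_intro _ 0 erefl))).
have H2 := H _ (ex_intro _ 0 (ex_intro _ 1 (ex_intro _ 0 erefl))).
have H3 := H _ (ex_intro _ 0 (ex_intro _ 0 (ex_intro _ 1 erefl))).
move: H1 H2 H3; rewrite !frob_dot_TT !dsumB !usumB !lsumB dsum_TT usum_TT lsum_TT.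
rewrite !conjC0 !conjC1 !mulr0 !mulr1 !add0r !addr0 => /eqP H1 /eqP H2 /eqP H3.
rewrite /projTT; congr tridiag_toeplitz.
- by move: H1; rewrite subr_eq0 => /eqP ->; rewrite mulrAC divff // mul1r.
- by move: H2; rewrite subr_eq0 => /eqP ->; rewrite mulrAC divff // mul1r.
- by move: H3; rewrite subr_eq0 => /eqP ->; rewrite mulrAC divff // mul1r.
Qed.

Lemma frob_normE n (A : 'M[C]_n) : frob_norm A = sqrtC (frob_dot A A).
Proof.
rewrite /frob_norm /frob_dot; congr sqrtC.
by apply: eq_bigr => i _; apply: eq_bigr => j _; rewrite normCK.
Qed.


Lemma normal_abs n (sg dl ta : C) : (2 <= n)%N ->
  normal_mx (tridiag_toeplitz n sg dl ta) -> `|sg| = `|ta|.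
Proof.
case: n => [|[|m]] // _; rewrite /normal_mx => /(congr1 (fun M : 'M[C]_m.+2 => M ord0 ord0)).
rewrite /ctr /tridiag_toeplitz !mxE !big_ord_recl !big1 /=; first last.
- by move=> i _; rewrite !mxE /= mul0r.
- by move=> i _; rewrite !mxE /= ?conjc0 ?conjC0 mulr0.
rewrite !mxE /= ?addr0 ?conjC0 ?conjc0 ?mulr0 ?mul0r ?addr0.
rewrite !conjcE [_^* * dl]mulrC [_^* * sg]mulrC -!normCK => /addrI /eqP.
by rewrite eqrXn2 // => /eqP.
Qed.

Lemma omega_props (sg ta s : C) : sg * ta != 0 -> `|sg| = `|ta| ->
  s ^+ 2 = sg * ta -> `|s / ta| = 1 /\ conjc (ta / s) = s / ta.
Proof.
move=> nz hab hs.
have ta0 : ta != 0 by move: nz; rewrite mulf_eq0 negb_or => /andP[].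
have s0 : s != 0 by apply: contraNneq nz => s0; rewrite -hs s0 expr0n.
have ns : `|s| = `|ta|.
  apply/eqP; rewrite -(@eqrXn2 _ 2) //; apply/eqP.
  by rewrite -normrX hs normrM hab expr2.
have nta : `|ta| != 0 by rewrite normr_eq0.
split; first by rewrite normrM normrV ?unitfE // ns divff.
rewrite conjcE rmorphM /= fmorphV /=.
apply/eqP; rewrite eqr_div ?conjC_eq0 //.
by rewrite [_ * ta]mulrC -!normCK ns.
Qed.

Lemma S_ge0 n (x : 'I_n -> C) : 0 <= \sum_(i < n) `|x i| ^+ 2.
Proof. by apply: sumr_ge0 => i _; rewrite exprn_ge0. Qed.

Lemma Wentry n (x : 'I_n -> C) (a b : C) :
  \sum_(i < n) `|x i| ^+ 2 != 0 ->
  (a / vnorm x) * conjc (b / vnorm x) = a * conjc b / \sum_(i < n) `|x i| ^+ 2.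
Proof.
move=> S0.
have N0 : 0 <= vnorm x by rewrite /vnorm sqrtC_ge0 S_ge0.
have Nc : conjc (vnorm x) = vnorm x := geC0_conj N0.
rewrite conjcE rmorphM /= fmorphV /= Nc.
by rewrite mulrACA -invfM -expr2 /vnorm sqrtCK.
Qed.

Lemma kappa_one n (x : 'I_n -> C) : \sum_(i < n) `|x i| ^+ 2 != 0 ->
  vnorm x * vnorm x / `|vdotH x x| = 1.
Proof.
move=> S0.
have -> : vdotH x x = \sum_(i < n) `|x i| ^+ 2.
  by apply: eq_bigr => i _; rewrite normCK mulrC.
by rewrite ger0_norm ?S_ge0 // -expr2 /vnorm sqrtCK divff.
Qed.

Definition Wm n (x : 'I_n -> C) : 'M[C]_n :=
  \matrix_(i, j) ((x i / vnorm x) * conjc (x j / vnorm x)).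

Arguments Wm {n}.

Lemma dsum_Wm n (x : 'I_n -> C) : \sum_(i < n) `|x i| ^+ 2 != 0 ->
  dsum (Wm x) = 1.
Proof.
move=> S0; rewrite /dsum sum_diag.
under eq_bigr => i _ do rewrite mxE Wentry // conjcE -normCK.
by rewrite -mulr_suml divff.
Qed.

Lemma usum_Wm n (x : 'I_n -> C) (x' : nat -> C) :
  \sum_(i < n) `|x i| ^+ 2 != 0 -> (forall i : 'I_n, x i = x' i) ->
  usum (Wm x) = (\sum_(i < n.-1) x' i * conjc (x' i.+1)) / \sum_(i < n) `|x i| ^+ 2.
Proof.
move=> S0 Hx; rewrite /usum (@sum_up n _
  (fun i j => x' i * conjc (x' j) / \sum_(i < n) `|x i| ^+ 2)).
  by rewrite mulr_suml.
by move=> i j _; rewrite mxE Wentry // !Hx.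
Qed.

Lemma lsum_Wm n (x : 'I_n -> C) (x' : nat -> C) :
  \sum_(i < n) `|x i| ^+ 2 != 0 -> (forall i : 'I_n, x i = x' i) ->
  lsum (Wm x) = (\sum_(i < n.-1) x' i.+1 * conjc (x' i)) / \sum_(i < n) `|x i| ^+ 2.
Proof.
move=> S0 Hx; rewrite /lsum (@sum_low n _
  (fun i j => x' i * conjc (x' j) / \sum_(i < n) `|x i| ^+ 2)).
  by rewrite mulr_suml.
by move=> i j _; rewrite mxE Wentry // !Hx.
Qed.

Lemma trig_sum m (v : nat -> C) c : v 0%N = 0 -> v m.+2 = 0 ->
  (forall k, v k + v k.+2 = 2%:R * c * v k.+1) ->
  \sum_(i < m) v i.+1 * v i.+2 = c * \sum_(i < m.+1) v i.+1 ^+ 2.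
Proof.
move=> v0 vm rec.
have E : \sum_(i < m.+1) v i.+1 * (v i + v i.+2) = 2%:R * c * \sum_(i < m.+1) v i.+1 ^+ 2.
  rewrite mulr_sumr; apply: eq_bigr => i _; rewrite rec; ring.
move: E; rewrite (eq_bigr (fun i : 'I_m.+1 => v i.+1 * v i + v i.+1 * v i.+2));
  last by move=> i _; rewrite mulrDr.
rewrite big_split /= big_ord_recl big_ord_recr /= v0 vm !mulr0 add0r addr0.
rewrite (eq_bigr (fun i : 'I_m => v i.+1 * v i.+2)); last by move=> i _; rewrite mulrC.
move=> E.
have two : (2%:R : C) != 0 by rewrite pnatr_eq0.
apply: (mulfI two); rewrite mulrA -E; ring.
Qed.

Lemma sin_natpi (h : nat) : sin (h%:R * pi) = 0 :> R.
Proof.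
elim: h => [|h IH]; first by rewrite mul0r sin0.
by rewrite -natr1 mulrDl mul1r sinDpi IH oppr0.
Qed.

Lemma sinC_props n h : (1 <= h <= n)%N ->
  let v := sinC n h in
  let c := (cos (h%:R * pi / (n.+1)%:R) : R)%:C in
  [/\ v 0%N = 0, v n.+1 = 0, v 1%N != 0,
      (forall k, v k + v k.+2 = 2%:R * c * v k.+1) &
      (forall k, conjc (v k) = v k)].
Proof.
move=> /andP[h1 hn] v c.
pose th : R := h%:R * pi / (n.+1)%:R.
have ek k : (h * k)%:R * pi / (n.+1)%:R = k%:R * th :> R.
  by rewrite natrM /th; ring.
have vE k : v k = (sin (k%:R * th))%:C by rewrite /v /sinC ek.
split.
- by rewrite vE mul0r sin0.
- rewrite vE; have -> : (n.+1)%:R * th = h%:R * pi.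
    by rewrite /th mulrC divfK // pnatr_eq0.
  by rewrite sin_natpi.
- rewrite vE mul1r eq_complex /= negb_and; apply/orP; left.
  apply: lt0r_neq0; apply: sin_gt0_pi; apply/andP; split.
    by rewrite /th divr_gt0 ?mulr_gt0 ?ltr0n ?pi_gt0.
  rewrite /th ltr_pdivrMr ?ltr0n // mulrC ltr_pM2l ?pi_gt0 // ltr_nat.
  by rewrite ltnS.
- move=> k; rewrite !vE /c.
  have e1 : k%:R * th = k.+1%:R * th - th by rewrite -natr1 mulrDl mul1r addrK.
  have e2 : k.+2%:R * th = k.+1%:R * th + th by rewrite -[k.+2]addn1 natrD mulrDl mul1r.
  rewrite e1 e2 sinB sinD -(rmorph_nat (real_complex R)) -!rmorphD -!rmorphM /=.
  congr (_%:C); ring.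
- by move=> k; rewrite vE conjc_real.
Qed.

Lemma conjcM (a b : C) : conjc (a * b) = conjc a * conjc b.
Proof. exact: rmorphM. Qed.
Lemma conjcX (a : C) k : conjc (a ^+ k) = conjc a ^+ k.
Proof. exact: rmorphXn. Qed.

Lemma sqrtC_realC (r : R) : 0 <= r -> sqrtC (r%:C) = (Num.sqrt r)%:C.
Proof.
move=> r0; rewrite -{1}(sqr_sqrtr r0) rmorphXn /= sqrCK //.
by rewrite ler0c sqrtr_ge0.
Qed.

Lemma final_alg (w c : C) (k m : nat) : w != 0 -> Num.conj w = w^-1 ->
  Num.conj c = c -> (k != 0)%N -> (m != 0)%N ->
  k%:R * (1 / k%:R) * Num.conj (1 / k%:R) +
  m%:R * (w^-1 * c / m%:R) * Num.conj (w^-1 * c / m%:R) +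
  m%:R * (w * c / m%:R) * Num.conj (w * c / m%:R) =
  k%:R^-1 + 2%:R / m%:R * c ^+ 2.
Proof.
move=> w0 hw hc k0 m0.
have k0' : k%:R != 0 :> C by rewrite pnatr_eq0.
have m0' : m%:R != 0 :> C by rewrite pnatr_eq0.
rewrite !rmorphM /= !fmorphV /= !conjC_nat conjC1 hw hc invrK.
by field; rewrite k0' m0' w0.
Qed.

Lemma realC_expr (k m : nat) (t : R) :
  ((k%:R^-1 + 2%:R / m%:R * t ^+ 2 : R))%:C = k%:R^-1 + 2%:R / m%:R * (t%:C) ^+ 2.
Proof.
by rewrite rmorphD /= rmorphM /= fmorphV /= rmorphM /= fmorphV /= rmorphXn /= !rmorph_nat.
Qed.

Lemma trig_sum' n (v : nat -> C) c : (0 < n)%N -> v 0%N = 0 -> v n.+1 = 0 ->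
  (forall k, v k + v k.+2 = 2%:R * c * v k.+1) ->
  \sum_(i < n.-1) v i.+1 * v i.+2 = c * \sum_(i < n) v i.+1 ^+ 2.
Proof. by case: n => [|m] // _; apply: trig_sum. Qed.

Lemma main_thm_R (n : nat) (sigma delta tau s : C) :
  (2 <= n)%N ->
  sigma * tau != 0 ->
  normal_mx (tridiag_toeplitz n sigma delta tau) ->
  s ^+ 2 = sigma * tau ->
  forall h : nat, (1 <= h <= n)%N ->
    (exists P, is_TT_proj (W_h n tau s h) P) /\
    (forall P, is_TT_proj (W_h n tau s h) P ->
       kappa n tau s h * frob_norm P =
       (Num.sqrt (n%:R^-1 + 2%:R / (n.-1)%:R
                   * cos (h%:R * pi / (n.+1)%:R) ^+ 2) : R)%:C).
Proof.
move=> n2 nz hN hs h hh.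
have hab := @normal_abs _ _ _ _ n2 hN.
have [hw hc] := @omega_props _ _ _ nz hab hs.
have [v0 vn v1 rec vr] := @sinC_props _ _ hh.
set c := (cos (h%:R * pi / (n.+1)%:R) : R)%:C in rec.
set w := s / tau in hw hc.
have ww : w * conjc w = 1 by rewrite conjcE -normCK hw expr1n.
have w0 : w != 0 by apply: contra_eq_neq hw => ->; rewrite normr0 eq_sym oner_eq0.
have cwE : conjc w = w^-1.
  by rewrite -[conjc w]mul1r -(mulVf w0) -mulrA ww mulr1.
have Ey : left_eigvec n tau s h = right_eigvec n tau s h by rewrite /left_eigvec -conjcE hc.
set x := right_eigvec n tau s h.
pose x' k := w ^+ k.+1 * sinC n h k.+1.
have xE : forall i : 'I_n, x i = x' i by [].
clearbody w.
have Sx : \sum_(i < n) `|x i| ^+ 2 = \sum_(i < n) sinC n h i.+1 ^+ 2.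
  apply: eq_bigr => i _; rewrite normCK -conjcE xE /x' conjcM conjcX vr.
  by rewrite mulrACA -exprMn ww expr1n mul1r expr2.
have S0 : \sum_(i < n) `|x i| ^+ 2 != 0.
  pose i0 : 'I_n := Ordinal (leq_trans (isT : (0 < 2)%N) n2).
  apply/negP => /eqP /psumr_eq0P H.
  have := H (fun i _ => exprn_ge0 2 (normr_ge0 (x i))) i0 isT.
  move/eqP; rewrite expf_eq0 /= normr_eq0 xE /x' mulf_eq0 expf_eq0 (negbTE w0) andbF /=.
  by rewrite (negbTE v1).
split; first by exists (projTT (W_h n tau s h)); apply: projTT_ok.
move=> P /(@projTT_uniq _ _ _ n2) ->.
have WE : W_h n tau s h = Wm x by rewrite /W_h Ey.
have kap : kappa n tau s h = 1 by rewrite /kappa Ey /=; apply: kappa_one.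
rewrite kap mul1r WE frob_normE /projTT frob_dot_TT dsum_TT usum_TT lsum_TT.
rewrite dsum_Wm // (@usum_Wm _ _ _ S0 xE) (@lsum_Wm _ _ _ S0 xE).
have n0 : (0 < n)%N by apply: leq_trans n2.
have U1 : \sum_(i < n.-1) x' i * conjc (x' i.+1) = conjc w * c * \sum_(i < n) `|x i| ^+ 2.
  rewrite (eq_bigr (fun i : 'I_n.-1 => conjc w * (sinC n h i.+1 * sinC n h i.+2))); last first.
    move=> i _; rewrite /x' conjcM conjcX vr [conjc w ^+ i.+2]exprS.
    rewrite -[RHS]mulr1 -(expr1n _ i.+1) -ww exprMn.
    by move: (w ^+ i.+1) (conjc w ^+ i.+1) => a b; ring.
  by rewrite -mulr_sumr (@trig_sum' _ _ _ n0 v0 vn rec) Sx mulrA.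
have U2 : \sum_(i < n.-1) x' i.+1 * conjc (x' i) = w * c * \sum_(i < n) `|x i| ^+ 2.
  rewrite (eq_bigr (fun i : 'I_n.-1 => w * (sinC n h i.+1 * sinC n h i.+2))); last first.
    move=> i _; rewrite /x' conjcM conjcX vr [w ^+ i.+2]exprS.
    rewrite -[RHS]mulr1 -(expr1n _ i.+1) -ww exprMn.
    by move: (w ^+ i.+1) (conjc w ^+ i.+1) => a b; ring.
  by rewrite -mulr_sumr (@trig_sum' _ _ _ n0 v0 vn rec) Sx mulrA.
have cc : conjc c = c by rewrite /c conjc_real.
rewrite U1 U2; move: (\sum_(i < n) `|x i| ^+ 2) S0 => S S0.
have k0 : (n != 0)%N by rewrite -lt0n.
have m0 : (n.-1 != 0)%N by rewrite -lt0n -ltnS (ltn_predK n2).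
rewrite !(mulfK S0) cwE (@final_alg w c n n.-1 w0 cwE cc k0 m0).
have r0 : 0 <= (n%:R^-1 + 2%:R / n.-1%:R * cos (h%:R * pi / n.+1%:R) ^+ 2 : R).
  apply: addr_ge0; first by rewrite invr_ge0 ler0n.
  apply: mulr_ge0; last exact: sqr_ge0.
  by apply: divr_ge0; apply: ler0n.
have E := @sqrtC_realC _ r0.
rewrite realC_expr in E.
exact: E.
Qed.
End Gen.

Theorem corollary3 (R : realType) (n : nat) (sigma delta tau s : complex R) :
  (2 <= n)%N ->
  sigma * tau != 0 ->
  normal_mx (tridiag_toeplitz n sigma delta tau) ->
  s ^+ 2 = sigma * tau ->
  forall h : nat, (1 <= h <= n)%N ->
    (exists P, is_TT_proj (W_h n tau s h) P) /\
    (forall P, is_TT_proj (W_h n tau s h) P ->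
       kappa n tau s h * frob_norm P =
       (Num.sqrt (n%:R^-1 + 2%:R / (n.-1)%:R
                   * cos (h%:R * pi / (n.+1)%:R) ^+ 2) : R)%:C).
Proof. exact: main_thm_R. Qed.
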